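(* Let $G$ be a graph, let $g:V(G)\to\mathbb N$, and let $v\in V(G)$. Suppose that $(G,g)$ has a removal scheme $\mathcal S=(<,\mathrm{sv})$ in which (i) $v\in\mathrm{sv}(u)$ for every $u\in N(v)$ deleted before $v$, and (ii) $x\notin\mathrm{sv}(v)$ for every $x\in N(v)$ deleted after $v$. Let $H=G-v$ and define $h:V(H)\to\mathbb N$ by $h(u)=g(u)-1$ if $u\in N(v)$ and $h(u)=g(u)$ otherwise. Then $H$ is $h$-removable.
   Context: All graphs are finite and simple. For a graph $G$, a function $f:V(G)\to\mathbb Z$, a vertex $u$ and a subset $W\subseteq N(u)$, the operation $\mathsf{DelSave}(G,f,u,W)$ outputs $G'=G-u$ and $f':V(G')\to\mathbb Z$ with $f'(x)=f(x)-1$ for $x\in N(u)\setminus W$ and $f'(x)=f(x)$ otherwise. This application is legal if $f(u)>\sum_{w\in W}f(w)$ and $f'(x)\ge1$ for all $x\in V(G')$. $G$ is $f$-removable (equivalently $(G,f)$ is removable) if all vertices of $G$ can be deleted by a sequence of legal $\mathsf{DelSave}$ applications, each time replacing $(G,f)$ by the output $(G',f')$; such a sequence is a removal scheme for $(G,f)$. A removal scheme is identified with the pair $(<,\mathrm{sv})$, where $<$ is the linear order in which vertices are deleted and $\mathrm{sv}(u)$ is the set $W$ used in the operation deleting $u$. The empty graph is trivially removable. *)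

(* Defs.v *)
From mathcomp Require Import all_boot all_order all_algebra.
Set Implicit Arguments. Unset Strict Implicit. Unset Printing Implicit Defensive.
Import Order.TTheory GRing.Theory Num.Theory.
Local Open Scope ring_scope.

(* A finite simple graph G is given by a vertex set V : {set T} inside a
   finType T and an adjacency relation e : rel T which is symmetric and
   irreflexive. Functions f : V(G) -> Z are represented as f : T -> int
   (values outside V are irrelevant). *)

Definition simple_rel (T : finType) (e : rel T) : Prop :=
  symmetric e /\ irreflexive e.

Definition nbhd (T : finType) (e : rel T) (V : {set T}) (u : T) : {set T} :=
  [set x in V | e u x].

Definition delsave_fun (T : finType) (e : rel T) (V : {set T})
    (f : T -> int) (u : T) (W : {set T}) : T -> int :=
  fun x => if (x \in nbhd e V u) && (x \notin W) then f x - 1 else f x.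

Definition delsave_legal (T : finType) (e : rel T) (V : {set T})
    (f : T -> int) (u : T) (W : {set T}) : Prop :=
  [/\ u \in V, W \subset nbhd e V u,
      \sum_(w in W) f w < f u
    & forall x, x \in V :\ u -> 1 <= delsave_fun e V f u W x].

(* (s, sv) is a removal scheme for ((V,e), f): s lists the vertices in the
   order they are deleted and sv u is the saved set W used when deleting u. *)
Fixpoint is_removal_scheme (T : finType) (e : rel T) (V : {set T})
    (f : T -> int) (s : seq T) (sv : T -> {set T}) : Prop :=
  match s with
  | [::] => V = set0
  | u :: s' => delsave_legal e V f u (sv u) /\
               is_removal_scheme e (V :\ u) (delsave_fun e V f u (sv u)) s' sv
  end.

Definition removable (T : finType) (e : rel T) (V : {set T}) (f : T -> int)
  : Prop := exists (s : seq T) (sv : T -> {set T}), is_removal_scheme e V f s sv.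

(* Main.v *)
Require Import Defs.
From mathcomp Require Import all_boot all_order all_algebra.
From mathcomp Require Import zify.
Import Order.TTheory GRing.Theory Num.Theory.
Local Open Scope ring_scope.
Set Implicit Arguments. Unset Strict Implicit.

Definition hfun (T : finType) (e : rel T) (V : {set T}) (v : T) (f : T -> int) :=
  fun u => if u \in nbhd e V v then f u - 1 else f u.

Definition cnd (T : finType) (e : rel T) (V : {set T}) (v : T) (s : seq T)
  (sv : T -> {set T}) : Prop :=
  (forall u, u \in nbhd e V v -> (index u s < index v s)%N -> v \in sv u) /\
  (forall x, x \in nbhd e V v -> (index v s < index x s)%N -> x \notin sv v).

Lemma sch_ext (T : finType) (e : rel T) (sv : T -> {set T}) (s : seq T) :
  forall V f f2, is_removal_scheme e V f s sv -> {in V, f =1 f2} ->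
  is_removal_scheme e V f2 s sv.
Proof.
elim: s => [|u s IH] V f f2 /=; first by [].
move=> [[uV sub lt pos] sch] eqf.
have eqd: {in V :\ u, delsave_fun e V f u (sv u) =1 delsave_fun e V f2 u (sv u)}.
  by move=> x /setD1P [_ xV]; rewrite /delsave_fun (eqf x xV).
split; last exact: IH sch eqd.
split=> //.
  rewrite -(eqf u uV).
  have -> : \sum_(w in sv u) f2 w = \sum_(w in sv u) f w.
    apply: eq_bigr => w wW; rewrite eqf //.
    by have := subsetP sub w wW; rewrite /nbhd inE => /andP[].
  by [].
by move=> x xV; rewrite -eqd //; exact: pos.
Qed.

Lemma sch_drop (T : finType) (e : rel T) (sv : T -> {set T}) (v : T) (s : seq T) :
  forall V f, is_removal_scheme e V f s sv -> v \notin V ->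
  is_removal_scheme e V f (filter (predC1 v) s) (fun u => sv u :\ v).
Proof.
elim: s => [|u s IH] V f /=; first by [].
move=> [[uV sub lt pos] sch] vV.
have uv: u != v by apply: contraNneq vV => <-.
rewrite uv /=.
have vsv : v \notin sv u.
  apply: contra vV => h; have := subsetP sub v h; rewrite /nbhd inE => /andP[].
  by [].
have svE: sv u :\ v = sv u.
  apply/setP=> w; rewrite !inE; case: eqP => // ->; by rewrite (negbTE vsv).
rewrite svE; split; first by split.
by apply: IH sch _; rewrite !inE negb_and vV orbT.
Qed.

Lemma cnd_tail (T : finType) (e : rel T) (V : {set T}) (v u : T) (s : seq T)
  (sv : T -> {set T}) : u != v -> cnd e V v (u :: s) sv -> cnd e (V :\ u) v s sv.
Proof.
move=> uv [c1 c2]; split.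
- move=> y; rewrite /nbhd !inE => /andP[/andP[yu yV] evy] lt.
  have uy : u != y by rewrite eq_sym.
  apply: c1; first by rewrite /nbhd inE yV evy.
  by rewrite /= (negbTE uy) (negbTE uv).
- move=> y; rewrite /nbhd !inE => /andP[/andP[yu yV] evy] lt.
  have uy : u != y by rewrite eq_sym.
  apply: c2; first by rewrite /nbhd inE yV evy.
  by rewrite /= (negbTE uy) (negbTE uv).
Qed.

Lemma delsave_le (T : finType) (e : rel T) V f u W x :
  delsave_fun e V f u W x <= f x.
Proof. rewrite /delsave_fun; case: ifP => _ //; lia. Qed.

Lemma sum_ge_one (T : finType) (W : {set T}) (f : T -> int) v :
  v \in W -> {in W, forall w, 0 <= f w} -> f v <= \sum_(w in W) f w.
Proof.
move=> vW pos; rewrite (bigD1 v) //= lerDl.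
by apply: sumr_ge0 => w /andP[wW _]; apply: pos.
Qed.

Lemma ge2 (T : finType) (e : rel T) (sv : T -> {set T}) (v : T) (s : seq T) :
  simple_rel e ->
  forall V f x, is_removal_scheme e V f s sv -> cnd e V v s sv -> v \in V ->
  x \in nbhd e V v -> 2 <= f x.
Proof.
move=> [esym eirr]; elim: s => [|u s IH] V f x /=.
  by move=> -> _; rewrite inE.
move=> [[uV sub lt pos] sch] [c1 c2] vV xN.
have xV : x \in V by move: xN; rewrite /nbhd inE => /andP[].
have exv : e v x by move: xN; rewrite /nbhd inE => /andP[].
have xv : x != v by apply: contraTneq exv => ->; rewrite eirr.
have termpos : {in sv u, forall w, 1 <= f w}.
  move=> w wW; have := subsetP sub w wW; rewrite /nbhd inE => /andP[wV euw].
  have wu : w != u by apply: contraTneq euw => ->; rewrite eirr.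
  have := pos w; rewrite /delsave_fun wW andbF; apply; by rewrite !inE wu wV.
case: (eqVneq u x) => [ux|ux].
  subst u.
  have vsv : v \in sv x.
    apply: c1; first exact: xN.
    by rewrite /= eqxx (negbTE xv).
  have := sum_ge_one vsv (fun w h => le_trans ler01 (termpos w h)).
  have := termpos v vsv; lia.
case: (eqVneq u v) => [uv|uv].
  subst u.
  have xsv : x \notin sv v.
    have vx : v != x by rewrite eq_sym.
    apply: c2 => //; by rewrite /= eqxx (negbTE vx).
  have := pos x; rewrite /delsave_fun xN xsv /= !inE xv xV => /(_ isT); lia.
have := IH (V :\ u) (delsave_fun e V f u (sv u)) x sch (cnd_tail uv (conj c1 c2)).
have vu : v != u by rewrite eq_sym.
have xu : x != u by rewrite eq_sym.
have vV' : v \in V :\ u by rewrite !inE vu vV.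
have xN' : x \in nbhd e (V :\ u) v by rewrite /nbhd !inE xu xV exv.
move=> /(_ vV' xN').
have := delsave_le e V f u (sv u) x; lia.
Qed.

Lemma mainl (T : finType) (e : rel T) (sv : T -> {set T}) (v : T) (s : seq T) :
  simple_rel e ->
  forall V f, is_removal_scheme e V f s sv -> v \in V -> cnd e V v s sv ->
  is_removal_scheme e (V :\ v) (hfun e V v f) (filter (predC1 v) s)
    (fun u => sv u :\ v).
Proof.
move=> [esym eirr]; elim: s => [|u s IH] V f /=.
  by move=> ->; rewrite inE.
move=> [[uV sub lt pos] sch] vV [c1 c2].
case: (eqVneq u v) => [uv|uv].
  move: uV sub lt pos sch c1 c2; rewrite uv => uV sub lt pos sch c1 c2.
  rewrite /=.
  apply: (sch_ext (sch_drop (v:=v) sch _)); first by rewrite !inE eqxx.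
  move=> x; rewrite !inE => /andP[xv xV]; rewrite /delsave_fun /hfun.
  case xN: (x \in nbhd e V v) => //=.
  have vx : v != x by rewrite eq_sym.
  have -> : x \notin sv v by apply: c2 => //; rewrite /= eqxx (negbTE vx).
  by [].
rewrite /=.
set f' := delsave_fun e V f u (sv u).
have vu : v != u by rewrite eq_sym.
have vV' : v \in V :\ u by rewrite !inE vu vV.
have ct := cnd_tail uv (conj c1 c2).
have IH' := IH (V :\ u) f' sch vV' ct.
have Vcomm : V :\ v :\ u = V :\ u :\ v by rewrite !setDDl setUC.
have eqd : {in V :\ u :\ v, hfun e (V :\ u) v f' =1
             delsave_fun e (V :\ v) (hfun e V v f) u (sv u :\ v)}.
  move=> x; rewrite !inE => /andP[xv /andP[xu xV]].
  rewrite /hfun /f' /delsave_fun /nbhd !inE xv xu xV /=.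
  by case: (e u x); case: (x \in sv u); case: (e v x) => //=.
split; last by rewrite Vcomm; apply: sch_ext IH' eqd.
split.
- by rewrite !inE uv uV.
- apply/subsetP => w; rewrite !inE => /andP[wv wsv].
  by have := subsetP sub w wsv; rewrite /nbhd !inE wv.
- case vsv: (v \in sv u).
    have euv : e u v by have := subsetP sub v vsv; rewrite /nbhd inE => /andP[].
    have uN : u \in nbhd e V v by rewrite /nbhd inE uV esym.
    have fv1 : 1 <= f v.
      have := pos v; rewrite /delsave_fun vsv andbF; apply; by rewrite !inE vu vV.
    have hle : \sum_(w in sv u :\ v) hfun e V v f w <= \sum_(w in sv u :\ v) f w.
      by apply: ler_sum => w _; rewrite /hfun; case: ifP => _ //; lia.
    have spl : \sum_(w in sv u) f w = f v + \sum_(w in sv u :\ v) f w.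
      rewrite (bigD1 v) //=; congr (_ + _); apply: eq_bigl => w.
      by rewrite !inE andbC.
    have hu : hfun e V v f u = f u - 1 by rewrite /hfun uN.
    rewrite hu; lia.
  have svE : sv u :\ v = sv u.
    by apply/setP=> w; rewrite !inE; case: eqP => // ->; rewrite vsv.
  have uN : u \notin nbhd e V v.
    apply/negP => uN; have := c1 u uN; rewrite /= eqxx (negbTE uv) => /(_ isT).
    by rewrite vsv.
  have hu : hfun e V v f u = f u by rewrite /hfun (negbTE uN).
  rewrite svE hu; apply: le_lt_trans lt; apply: ler_sum => w _.
  by rewrite /hfun; case: ifP => _ //; lia.
- move=> x xin; have xin' : x \in V :\ u :\ v by rewrite -Vcomm.
  rewrite -(eqd x xin'); move: xin'; rewrite !inE => /andP[xv /andP[xu xV]].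
  rewrite /hfun; case xN: (x \in nbhd e (V :\ u) v).
    have := ge2 (conj esym eirr) sch ct vV' xN; rewrite /f'; lia.
  by rewrite /f'; apply: pos; rewrite !inE xu xV.
Qed.

Unset Implicit Arguments.

Theorem lemma3p2 (T : finType) (e : rel T) (V : {set T}) (g : T -> nat)
    (v : T) (s : seq T) (sv : T -> {set T}) :
  simple_rel e ->
  v \in V ->
  is_removal_scheme e V (fun x => (g x)%:Z) s sv ->
  (forall u, u \in nbhd e V v -> (index u s < index v s)%N -> v \in sv u) ->
  (forall x, x \in nbhd e V v -> (index v s < index x s)%N -> x \notin sv v) ->
  removable e (V :\ v)
    (fun u => if u \in nbhd e V v then (g u)%:Z - 1 else (g u)%:Z).
Proof.
move=> se vV sch c1 c2.
exists (filter (predC1 v) s), (fun u => sv u :\ v).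
exact: (mainl se sch vV (conj c1 c2)).
Qed.
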